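(* Let $G$ be a three-dimensional Lie group with Lie algebra $\mathfrak{g}$. Then $G$ admits a left-invariant contact form $\omega$ (with contact distribution $D=\ker\omega$) if and only if there exists a completely nonholonomic left-invariant rank two distribution $D$ on $G$ together with a left-invariant rank one distribution $D^{\perp}$ complementary to $D$ such that $[D^{\perp}(e),D(e)]\subset D(e)$; moreover, in this situation there exists a non-zero left-invariant $1$-form $\omega$ on $G$ with $\omega(D)=0$ (and it is a contact form).
   Context: A $1$-form $\omega$ on a $3$-manifold is contact if $\omega\wedge d\omega\neq 0$ everywhere. A distribution is completely nonholonomic if iterated Lie brackets of vector fields tangent to it span the whole tangent space at each point. Left-invariant distributions are identified with subspaces $D(e)\subset\mathfrak{g}$. *)

(* Defs.v *)
(* real Lie algebras of dimension 3 as vectType's over a realType. *)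
From HB Require Import structures.
From mathcomp Require Import all_boot all_order all_algebra.
From mathcomp Require Import reals.
Set Implicit Arguments. Unset Strict Implicit. Unset Printing Implicit Defensive.
Import Order.TTheory GRing.Theory Num.Theory.
Local Open Scope ring_scope.


Section LieDefs.
Variables (R : realType) (V : vectType R).

Definition is_lie_bracket (br : V -> V -> V) : Prop :=
  [/\ (forall (a : R) (x y z : V), br (a *: x + y) z = a *: br x z + br y z),
      (forall (a : R) (x y z : V), br z (a *: x + y) = a *: br z x + br z y),
      (forall x : V, br x x = 0) &
      (forall x y z : V, br x (br y z) + br y (br z x) + br z (br x y) = 0)].

(* Exterior derivative of a left-invariant 1-form, evaluated on left-invariant
   fields:  d omega (X,Y) = X(omega Y) - Y(omega X) - omega([X,Y]) = - omega([X,Y]). *)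
Definition dform (br : V -> V -> V) (omega : {scalar V}) (x y : V) : R :=
  - omega (br x y).

Definition wedge_d (br : V -> V -> V) (omega : {scalar V}) (x y z : V) : R :=
  omega x * dform br omega y z - omega y * dform br omega x z
  + omega z * dform br omega x y.

(* left-invariant contact form: omega /\ d omega <> 0 (at e, hence everywhere) *)
Definition contact_form (br : V -> V -> V) (omega : {scalar V}) : Prop :=
  exists x y z : V, wedge_d br omega x y z != 0.

Inductive iter_bracket (br : V -> V -> V) (D : {vspace V}) : V -> Prop :=
  | ib_base x : x \in D -> iter_bracket br D x
  | ib_br x y : iter_bracket br D x -> iter_bracket br D y ->
                iter_bracket br D (br x y).

Definition completely_nonholonomic (br : V -> V -> V) (D : {vspace V}) : Prop :=
  exists s : seq V, (forall x, x \in s -> iter_bracket br D x) /\ (<<s>> = fullv)%VS.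

End LieDefs.

(* Main.v *)
Require Import Defs.
From HB Require Import structures.
From mathcomp Require Import all_boot all_order all_algebra.
From mathcomp Require Import reals.
From Stdlib Require Import Classical.
From mathcomp Require Import ring lra.
Import Order.TTheory GRing.Theory Num.Theory.
Local Open Scope ring_scope.

Section Aux.
Variables (R : realType) (V : vectType R) (br : V -> V -> V).
Hypothesis hlie : is_lie_bracket br.

Lemma br0l z : br 0 z = 0.
Proof.
case: hlie => hl _ _ _.
have h := hl 1 0 0 z; rewrite !scale1r addr0 in h.
have: br 0 z + 0 = br 0 z + br 0 z by rewrite addr0 -h.
by move/addrI.
Qed.

Lemma br0r z : br z 0 = 0.
Proof.
case: hlie => _ hr _ _.
have h := hr 1 0 0 z; rewrite !scale1r addr0 in h.
have: br z 0 + 0 = br z 0 + br z 0 by rewrite addr0 -h.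
by move/addrI.
Qed.

Lemma brZl a x z : br (a *: x) z = a *: br x z.
Proof. by case: hlie => hl _ _ _; have := hl a x 0 z; rewrite br0l !addr0. Qed.
Lemma brZr a x z : br z (a *: x) = a *: br z x.
Proof. by case: hlie => _ hr _ _; have := hr a x 0 z; rewrite br0r !addr0. Qed.
Lemma brDl x y z : br (x + y) z = br x z + br y z.
Proof. by case: hlie => hl _ _ _; have := hl 1 x y z; rewrite !scale1r. Qed.
Lemma brDr x y z : br z (x + y) = br z x + br z y.
Proof. by case: hlie => _ hr _ _; have := hr 1 x y z; rewrite !scale1r. Qed.
Lemma brxx x : br x x = 0.
Proof. by case: hlie. Qed.
Lemma brN x y : br y x = - br x y.
Proof.
have := brxx (x + y); rewrite brDl !brDr !brxx add0r addr0.
by move/eqP; rewrite addr_eq0 => /eqP ->; rewrite opprK.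
Qed.
Lemma brBl x y z : br (x - y) z = br x z - br y z.
Proof. by rewrite brDl -scaleN1r brZl scaleN1r. Qed.

Lemma omega_br0 (om : {scalar V}) u x0 y0 a b :
  om x0 = 0 -> om y0 = 0 ->
  (forall a b, om a = 0 -> om b = 0 -> om (br a b) = 0) ->
  om (br (x0 + a *: u) (y0 + b *: u)) = b * om (br x0 u) - a * om (br y0 u).
Proof.
move=> hx0 hy0 hD.
rewrite brDl !brDr !brZl !brZr brxx !scaler0 addr0 (brN y0 u).
rewrite !linearD /= !linearZ /= linearN /= (hD _ _ hx0 hy0) add0r.
rewrite mulrN; lra.
Qed.

Lemma omega_br (om : {scalar V}) u x y :
  om u = 1 ->
  (forall a b, om a = 0 -> om b = 0 -> om (br a b) = 0) ->
  om (br x y) = om y * om (br (x - om x *: u) u) - om x * om (br (y - om y *: u) u).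
Proof.
move=> hu hD.
have hx0 : om (x - om x *: u) = 0 by rewrite linearB linearZ /= hu mulr1 subrr.
have hy0 : om (y - om y *: u) = 0 by rewrite linearB linearZ /= hu mulr1 subrr.
by rewrite -(@omega_br0 om u _ _ (om x) (om y) hx0 hy0 hD) !subrK.
Qed.

Lemma wedge0 (om : {scalar V}) u :
  om u = 1 ->
  (forall a b, om a = 0 -> om b = 0 -> om (br a b) = 0) ->
  forall x y z, wedge_d br om x y z = 0.
Proof.
move=> hu hD x y z; have E := fun a b => omega_br om u a b hu hD.
rewrite /wedge_d /dform (E y z) (E x z) (E x y).
set p := om (br (x - _ *: u) u); set q := om (br (y - _ *: u) u); set r := om (br (z - _ *: u) u).
ring.
Qed.

Lemma part2 (hdim : \dim (fullv : {vspace V}) = 3%N) (D Dp : {vspace V}) :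
      \dim D = 2%N -> completely_nonholonomic br D -> \dim Dp = 1%N ->
      (D + Dp = fullv)%VS -> (D :&: Dp = 0)%VS ->
      exists omega : {scalar V},
        (exists x, omega x != 0) /\ (forall x, x \in D -> omega x = 0) /\
        contact_form br omega.
Proof.
move=> hD hcnh hDp hsum hcap.
pose v := vpick Dp.
have hDp0 : Dp != 0%VS by rewrite -dimv_eq0 hDp.
have hv : v \in Dp by apply: memv_pick.
have hvn : v != 0 by rewrite vpick0.
have hDpv : Dp = <[v]>%VS.
  by apply/esym/eqP; rewrite eqEdim -memvE hv /= dim_vline hvn hDp.
have hcap' : (Dp :&: D = 0)%VS by rewrite capvC.
have hin x : (x \in Dp + D)%VS by rewrite addvC hsum memvf.
pose om : {scalar V} := (coord [tuple v] ord0 \o daddv_pi Dp D)%FUN.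
have h1 : coord [tuple v] ord0 v = 1.
  by have := @coord_free _ _ 1 [tuple v] ord0 ord0; rewrite seq1_free hvn eqxx => /(_ isT).
have hpiD x : x \in D -> daddv_pi Dp D x = 0.
  move=> xD; have := daddv_pi_add hcap' (hin x).
  by rewrite (daddv_pi_id hcap xD) => /(canRL (addrK _)); rewrite subrr.
have hom0 x : x \in D -> om x = 0 by move=> xD; rewrite /om /= hpiD // linear0.
have homv : om v = 1 by rewrite /om /= daddv_pi_id.
have hker x : om x = 0 -> x \in D.
  move=> h0.
  have : daddv_pi Dp D x \in <[v]>%VS by rewrite -hDpv memv_pi.
  case/vlineP=> c hc.
  move: h0; rewrite /om /= hc linearZ /= h1 mulr1 => c0.
  move: hc; rewrite c0 scale0r => hp.
  have := daddv_pi_add hcap' (hin x); rewrite hp add0r => <-.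
  exact: memv_pi.
have [e1 [e2 [he1 [he2 hk]]]] :
    exists e1 e2, e1 \in D /\ e2 \in D /\ om (br e1 e2) != 0.
  apply: NNPP => hn.
  have hcl a b : a \in D -> b \in D -> br a b \in D.
    move=> ha hb; apply: hker; case: (eqVneq (om (br a b)) 0) => // hne; exfalso.
    by apply: hn; exists a, b.
  have hit x : iter_bracket br D x -> x \in D.
    by elim=> // a b _ ha _ hb; exact: hcl.
  case: hcnh => s [hs hsp].
  have : (<<s>> <= D)%VS by apply/span_subvP => x /hs/hit.
  by rewrite hsp => /dimvS; rewrite hdim hD.
exists om; split; first by exists v; rewrite homv oner_neq0.
split; first exact: hom0.
exists e1, e2, v; rewrite /wedge_d /dform (hom0 e1 he1) (hom0 e2 he2) homv.
by rewrite !mul0r subrr add0r mul1r oppr_eq0.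
Qed.

Lemma part1f (hdim : \dim (fullv : {vspace V}) = 3%N) (om : {scalar V}) :
  contact_form br om ->
   (exists D Dp : {vspace V},
      [/\ \dim D = 2%N, completely_nonholonomic br D, \dim Dp = 1%N,
          ((D + Dp = fullv)%VS /\ (D :&: Dp = 0)%VS) &
          (forall x y, x \in Dp -> y \in D -> br x y \in D)]).
Proof.
case=> x [y [z hw]].
have [u hu] : exists u, om u = 1.
  apply: NNPP => hn; move/negP: hw; apply.
  have hz w : om w = 0.
    case: (eqVneq (om w) 0) => // hne; exfalso; apply: hn.
    by exists ((om w)^-1 *: w); rewrite linearZ /= mulVf.
  by rewrite /wedge_d /dform !hz !mul0r subrr add0r.
have [e1 [e2 [he1 [he2 hk]]]] :
    exists e1 e2, om e1 = 0 /\ om e2 = 0 /\ om (br e1 e2) != 0.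
  apply: NNPP => hn; move/negP: hw; apply.
  rewrite (wedge0 om u hu _ x y z) //.
  move=> a b ha hb; case: (eqVneq (om (br a b)) 0) => // hne; exfalso; apply: hn.
  by exists a, b.
pose k := om (br e1 e2).
pose v := u - (om (br u e2) / k) *: e1 + (om (br u e1) / k) *: e2.
pose D := <<[:: e1; e2]>>%VS.
have hDm w : w \in D -> exists c d, w = c *: e1 + d *: e2.
  rewrite /D span_cons span_seq1 => /memv_addP [a /vlineP[c ->] [b /vlineP[d ->] ->]].
  by exists c, d.
have hD0 w : w \in D -> om w = 0.
  by move/hDm => [c [d ->]]; rewrite linearD !linearZ /= he1 he2 !mulr0 addr0.
have he2n : e2 != 0 by apply: contraNneq hk => ->; rewrite br0r linear0.
have he1n : e1 \notin <[e2]>%VS.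
  by apply/negP => /vlineP [c hc]; move: hk; rewrite hc brZl brxx scaler0 linear0 eqxx.
have hfree : free [:: e1; e2] by rewrite free_cons span_seq1 he1n seq1_free he2n.
have hdD : \dim D = 2%N by move/eqP: hfree.
have hvom : om v = 1.
  by rewrite /v linearD linearB !linearZ /= hu he1 he2 !mulr0 subr0 addr0.
have hvn : v != 0.
  by apply/eqP => hv0; move: hvom; rewrite hv0 linear0 => /eqP; rewrite eq_sym oner_eq0.
have hcap : (D :&: <[v]> = 0)%VS.
  apply/eqP; rewrite -subv0; apply/subvP => w; rewrite memv_cap => /andP[/hD0 hw0 /vlineP[c hc]].
  by move: hw0; rewrite hc linearZ /= hvom mulr1 => ->; rewrite scale0r memv0.
have hd3 : \dim (D + <[v]>)%VS = 3%N.
  by have := dimv_sum_cap D <[v]>; rewrite hcap dimv0 addn0 hdD dim_vline hvn.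
have hsum : (D + <[v]> = fullv)%VS.
  by apply/eqP; rewrite eqEdim subvf /= hdim hd3.
have hker w : om w = 0 -> w \in D.
  move=> hw0; have := memvf w; rewrite -hsum => /memv_addP [a ha [b /vlineP[c ->] hab]].
  move: hw0; rewrite hab linearD linearZ /= hD0 // hvom mulr1 add0r => ->.
  by rewrite scale0r addr0.
have hv1 : om (br v e1) = 0.
  rewrite /v brDl brBl !brZl brxx (brN e1 e2) scaler0.
  rewrite linearD linearB !linearZ linearN linear0 /= -/k.
  by rewrite subr0 mulrN divfK // subrr.
have hv2 : om (br v e2) = 0.
  rewrite /v brDl brBl !brZl brxx scaler0 addr0.
  rewrite linearB !linearZ /= -/k.
  by rewrite divfK // subrr.
have hbrv w : w \in D -> om (br v w) = 0.
  move/hDm => [c [d ->]].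
  by rewrite brDr !brZr linearD !linearZ /= hv1 hv2 !mulr0 addr0.
have hb1 : e1 \in D by apply: memv_span; rewrite inE eqxx.
have hb2 : e2 \in D by apply: memv_span; rewrite !inE eqxx orbT.
have hcnh : completely_nonholonomic br D.
  exists [:: br e1 e2; e1; e2]; split.
    move=> w; rewrite !inE => /or3P[]/eqP->.
    - by apply: ib_br; apply: ib_base.
    - exact: ib_base.
    - exact: ib_base.
  apply/eqP; rewrite eqEdim subvf hdim /=.
  have : free [:: br e1 e2; e1; e2].
    rewrite free_cons hfree andbT; apply/negP => /hD0/eqP.
    by rewrite (negbTE hk).
  by move/eqP ->.
exists D, <[v]>%VS; split => //.
- by rewrite dim_vline hvn.
- move=> a b /vlineP[c ->] bD; rewrite brZl; apply: memvZ; apply: hker.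
  exact: hbrv.
Qed.
End Aux.

Theorem proposition1 (R : realType) (V : vectType R) (br : V -> V -> V)
  (hdim : \dim (fullv : {vspace V}) = 3%N) (hlie : is_lie_bracket br) :
  ((exists omega : {scalar V}, contact_form br omega) <->
   (exists D Dp : {vspace V},
      [/\ \dim D = 2%N, completely_nonholonomic br D, \dim Dp = 1%N,
          ((D + Dp = fullv)%VS /\ (D :&: Dp = 0)%VS) &
          (forall x y, x \in Dp -> y \in D -> br x y \in D)]))
  /\
  (forall D Dp : {vspace V},
      \dim D = 2%N -> completely_nonholonomic br D -> \dim Dp = 1%N ->
      (D + Dp = fullv)%VS -> (D :&: Dp = 0)%VS ->
      (forall x y, x \in Dp -> y \in D -> br x y \in D) ->
      exists omega : {scalar V},
        (exists x, omega x != 0) /\ (forall x, x \in D -> omega x = 0) /\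
        contact_form br omega).
Proof.
split.
  split.
    by case=> om hc; exact: (@part1f _ _ _ hlie hdim _ hc).
  case=> D [Dp [hD hcnh hDp [hsum hcap] _]].
  have [om [_ [_ hc]]] := @part2 _ _ _ hdim _ _ hD hcnh hDp hsum hcap.
  by exists om.
move=> D Dp hD hcnh hDp hsum hcap _.
exact: (@part2 _ _ _ hdim _ _ hD hcnh hDp hsum hcap).
Qed.
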